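(* Let $f$ be the staircase function with descriptor $(h,o,\delta,\ell,L,V)$, and for $i\in[h]$ let $\Lambda_i$ be the schema partition of $\mathfrak B_\ell$ whose fixed positions are exactly the entries of rows $1,\dots,i$ of $L$ (so $\Lambda_i$ consists of $2^{oi}$ schemata, one of which is stage $i$ of $f$). Then for every $i\in[h]$, $$\sum_{\xi\in\Lambda_i,\ \xi\neq \text{stage } i} S(\xi) = -i\delta.$$
   Context: For a positive integer $n$, $[n]=\{1,\dots,n\}$ and $\mathfrak B_\ell$ is the set of binary strings of length $\ell$; $g_j$ denotes the $j$-th bit of $g$. For a $k$-tuple $x=(x_1,\dots,x_k)$ of integers in $[\ell]$ and $g\in\mathfrak B_\ell$, $\Xi_x(g)$ is the string $g_{x_1}g_{x_2}\cdots g_{x_k}$. For a matrix $M$, $M_{i:}$ is its $i$-th row (as a tuple). A schema is a set of the form $\{g\in\mathfrak B_\ell: g_j=c_j \text{ for all } j\in D\}$ for some $D\subseteq[\ell]$ and bits $c_j$; the schema partition with fixed positions $D$ is the set of all $2^{|D|}$ such schemata. A staircase function descriptor is a tuple $(h,o,\delta,\ell,L,V)$ where $h,o,\ell$ are positive integers with $ho\le \ell$, $\delta>0$ is real, $V$ is an $h\times o$ matrix of bits, and $L$ is an $h\times o$ matrix whose $ho$ entries are pairwise distinct integers in $[\ell]$. The staircase function $f$ with this descriptor is the stochastic function on $\mathfrak B_\ell$ computed as follows on input $g$: draw $x\sim\mathcal N(0,1)$ (independently at each evaluation); for $i=1,\dots,h$ in order: if $\Xi_{L_{i:}}(g)=V_{i1}\cdots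 V_{io}$ then set $x\leftarrow x+\delta$, otherwise set $x\leftarrow x-\delta/(2^o-1)$ and stop the loop; return $x$. Step $i$ of $f$ is the schema $\{g\in\mathfrak B_\ell:\Xi_{L_{i:}}(g)=V_{i1}\cdots V_{io}\}$; stage $i$ of $f$ is the schema of all $g$ lying in steps $1,\dots,i$ simultaneously. For a schema $\gamma\subseteq\mathfrak B_\ell$, $F_\gamma$ is the random variable giving the value of $f$ at a string drawn uniformly from $\gamma$. The fitness signal of $\gamma$ is $S(\gamma)=\mathbf E[F_\gamma]-\mathbf E[F_{\mathfrak B_\ell}]$. *)

(* Defs.v *)
From HB Require Import structures.
From mathcomp Require Import all_boot all_order all_algebra.
Set Implicit Arguments. Unset Strict Implicit. Unset Printing Implicit Defensive.
Import Order.TTheory GRing.Theory Num.Theory.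
Local Open Scope ring_scope.

(* Binary strings of length l: g j is the j-th bit (0-based positions 'I_l). *)
Definition bstring (l : nat) := {ffun 'I_l -> bool}.

(* Row k of the descriptor (0-based): Xi_{L_k}(g) = V_k1 ... V_ko *)
Definition step_ok (h o l : nat) (L : 'M['I_l]_(h, o)) (V : 'M[bool]_(h, o))
  (k : 'I_h) (g : bstring l) : bool :=
  [forall j : 'I_o, g (L k j) == V k j].

Definition step_set (h o l : nat) (L : 'M['I_l]_(h, o)) (V : 'M[bool]_(h, o))
  (k : 'I_h) : {set bstring l} := [set g : bstring l | step_ok L V k g].

(* Stage i of f (paper's 1-based i): strings lying in steps 1..i,
   i.e. in the 0-based steps k with k < i. *)
Definition stage (h o l : nat) (L : 'M['I_l]_(h, o)) (V : 'M[bool]_(h, o))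
  (i : nat) : {set bstring l} :=
  [set g : bstring l | [forall k : 'I_h, (k < i)%N ==> step_ok L V k g]].

(* Deterministic increment accumulated by the loop of f on input g,
   processing the rows in the given order. *)
Fixpoint loop_incr (R : realFieldType) (h o l : nat) (delta : R)
  (L : 'M['I_l]_(h, o)) (V : 'M[bool]_(h, o)) (g : bstring l)
  (rows : seq 'I_h) : R :=
  match rows with
  | [::] => 0
  | k :: s => if step_ok L V k g then delta + loop_incr delta L V g s
              else - (delta / (2%:R ^+ o - 1))
  end.

(* Expected value of f at g: E[x] = 0 for x ~ N(0,1), plus the
   deterministic increment of the loop over rows 1..h in order. *)
Definition staircase_mean (R : realFieldType) (h o l : nat) (delta : R)
  (L : 'M['I_l]_(h, o)) (V : 'M[bool]_(h, o)) (g : bstring l) : R :=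
  0 + loop_incr delta L V g (enum 'I_h).

Definition schema_mean (R : realFieldType) (h o l : nat) (delta : R)
  (L : 'M['I_l]_(h, o)) (V : 'M[bool]_(h, o)) (gamma : {set bstring l}) : R :=
  (\sum_(g in gamma) staircase_mean delta L V g) / (#|gamma|%:R).

Definition fitness_signal (R : realFieldType) (h o l : nat) (delta : R)
  (L : 'M['I_l]_(h, o)) (V : 'M[bool]_(h, o)) (gamma : {set bstring l}) : R :=
  schema_mean delta L V gamma - schema_mean delta L V [set: bstring l].

Definition schema (l : nat) (D : {set 'I_l}) (c : bstring l) : {set bstring l} :=
  [set g : bstring l | [forall j in D, g j == c j]].

Definition schema_partition (l : nat) (D : {set 'I_l}) : {set {set bstring l}} :=
  [set schema D c | c : bstring l].

Definition rows_positions (h o l : nat) (L : 'M['I_l]_(h, o)) (i : nat)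
  : {set 'I_l} :=
  [set L k.1 k.2 | k : 'I_h * 'I_o & (k.1 < i)%N].

Definition descriptor_ok (R : realFieldType) (h o l : nat) (delta : R)
  (L : 'M['I_l]_(h, o)) : Prop :=
  (0 < h)%N /\ (0 < o)%N /\ (0 < l)%N /\ (h * o <= l)%N /\ 0 < delta /\
  injective (fun p : 'I_h * 'I_o => L p.1 p.2).

(* Main.v *)
Require Import Defs.
From HB Require Import structures.
From mathcomp Require Import all_boot all_order all_algebra.
Set Implicit Arguments. Unset Strict Implicit. Unset Printing Implicit Defensive.
Import Order.TTheory GRing.Theory Num.Theory.
Local Open Scope ring_scope.

Definition flip (l : nat) (m g : bstring l) : bstring l := [ffun p => g p (+) m p].

Lemma flipK l (m : bstring l) : involutive (flip m).
Proof. by move=> g; apply/ffunP=> p; rewrite !ffunE addbK. Qed.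

Lemma card_flip_le l (m : bstring l) (A B : {set bstring l}) :
  (forall g, g \in A -> flip m g \in B) -> (#|A| <= #|B|)%N.
Proof.
move=> H; rewrite -(card_imset _ (inv_inj (flipK m))).
apply: subset_leq_card; apply/subsetP=> x /imsetP [g gA ->]; exact: H.
Qed.

Lemma Linj2 h o l (L : 'M['I_l]_(h,o))
  (Linj : injective (fun p : 'I_h * 'I_o => L p.1 p.2)) k j k' j' :
  (L k j == L k' j') = ((k == k') && (j == j')).
Proof.
apply/eqP/andP => [E | [/eqP-> /eqP->]] //.
by case: (Linj (k,j) (k',j') E) => -> ->.
Qed.

Definition rowpos h o l (L : 'M['I_l]_(h,o)) (s : seq 'I_h) : {set 'I_l} :=
  [set p | [exists k : 'I_h, exists j : 'I_o, (k \in s) && (L k j == p)]].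

Definition closed_under h o l (L : 'M['I_l]_(h,o)) (A : {set bstring l})
  (s : seq 'I_h) :=
  forall m : bstring l, (forall p, m p -> p \in rowpos L s) ->
  forall g, g \in A -> flip m g \in A.

Definition proj h o l (L : 'M['I_l]_(h,o)) (k : 'I_h) (g : bstring l)
  : {ffun 'I_o -> bool} := [ffun j => g (L k j)].

Lemma class_card h o l (L : 'M['I_l]_(h,o))
  (Linj : injective (fun p : 'I_h * 'I_o => L p.1 p.2)) A k
  (v v' : {ffun 'I_o -> bool}) :
  closed_under L A [:: k] ->
  (#|[set g in A | proj L k g == v]| <= #|[set g in A | proj L k g == v']|)%N.
Proof.
move=> cl.
pose m : bstring l := [ffun p => [exists j, (L k j == p) && (v j != v' j)]].
apply: (card_flip_le (m := m)) => g; rewrite !inE => /andP [gA /eqP pg].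
apply/andP; split.
- apply: cl gA => p; rewrite ffunE => /existsP [j /andP [/eqP <- _]].
  rewrite inE; apply/existsP; exists k; apply/existsP; exists j.
  by rewrite mem_seq1 !eqxx.
- apply/eqP/ffunP => j; rewrite !ffunE.
  have -> : [exists j0, (L k j0 == L k j) && (v j0 != v' j0)] = (v j != v' j).
    apply/existsP/idP => [[j0 /andP [E H]] | H]; last by exists j; rewrite eqxx.
    by move: E; rewrite (Linj2 Linj) eqxx /= => /eqP <-.
  have -> : g (L k j) = v j by rewrite -pg ffunE.
  by case: (v j); case: (v' j).
Qed.

Lemma row_count h o l (L : 'M['I_l]_(h,o))
  (Linj : injective (fun p : 'I_h * 'I_o => L p.1 p.2))
  (V : 'M[bool]_(h,o)) A k :
  closed_under L A [:: k] ->
  #|A| = (2 ^ o * #|[set g in A | step_ok L V k g]|)%N.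
Proof.
move=> cl.
have E : #|[set g in A | step_ok L V k g]| =
         #|[set g in A | proj L k g == [ffun j => V k j]]|.
  apply: eq_card => g; rewrite !inE; congr (_ && _).
  apply/forallP/eqP => [H | H]; first by apply/ffunP=> j; rewrite !ffunE; apply/eqP/H.
  by move=> j; rewrite -[V k j](ffunE (fun j => V k j)) -H ffunE.
rewrite E -sum1_card (partition_big (proj L k) predT) //=.
rewrite (eq_bigr (fun _ => #|[set g in A | proj L k g == [ffun j => V k j]]|)).
  by rewrite sum_nat_const card_ffun card_bool card_ord.
move=> v _; rewrite -sum1_card.
have -> : \sum_(i in A | proj L k i == v) 1 = #|[set g in A | proj L k g == v]|.
  by rewrite -sum1_card; apply: eq_bigl => g; rewrite inE.
by rewrite sum1_card; apply/eqP; rewrite eqn_leq !(class_card Linj _ _ cl).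
Qed.

Lemma pow2_neq1 (R : realFieldType) o : (0 < o)%N -> (2%:R ^+ o - 1 : R) != 0.
Proof.
move=> o0; rewrite subr_eq0 -natrX (_ : 1 = 1%:R) // eqr_nat; apply/eqP => E.
by move: (ltn_exp2l 0 o (isT : (1 < 2)%N)); rewrite expn0 E o0.
Qed.

Lemma T0 (R : realFieldType) h o l (delta : R) (L : 'M['I_l]_(h,o))
  (Linj : injective (fun p : 'I_h * 'I_o => L p.1 p.2))
  (V : 'M[bool]_(h,o)) (o_gt0 : (0 < o)%N) (s : seq 'I_h) :
  uniq s -> forall A, closed_under L A s ->
  \sum_(g in A) loop_incr delta L V g s = 0.
Proof.
elim: s => [|k s IH] /= ; first by move=> _ A _; rewrite big1.
case/andP => ks us A cl.
have clk : closed_under L A [:: k].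
  move=> m Hm; apply: cl => p /Hm; rewrite !inE => /existsP [k' /existsP [j /andP [H1 H2]]].
  apply/existsP; exists k'; apply/existsP; exists j; rewrite H2 andbT in_cons.
  by rewrite mem_seq1 in H1; rewrite H1.
have cl' : closed_under L [set g in A | step_ok L V k g] s.
  move=> m Hm g; rewrite !inE => /andP [gA ok]; apply/andP; split.
    apply: cl gA => p /Hm; rewrite !inE => /existsP [k' /existsP [j /andP [H1 H2]]].
    apply/existsP; exists k'; apply/existsP; exists j; rewrite H2 andbT in_cons.
    by rewrite H1 orbT.
  apply/forallP => j; rewrite ffunE.
  have -> : m (L k j) = false.
    apply/negbTE/negP => /Hm; rewrite inE => /existsP [k' /existsP [j' /andP [ks' E]]].
    move: E; rewrite (Linj2 Linj) => /andP [/eqP Ek _].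
    by move: ks'; rewrite Ek (negbTE ks).
  by rewrite addbF; apply: (forallP ok).
rewrite (bigID (step_ok L V k)) /=.
rewrite (eq_bigr (fun g => delta + loop_incr delta L V g s)); last by move=> g /andP [_ ->].
rewrite [X in _ + X](eq_bigr (fun _ => - (delta / (2%:R ^+ o - 1)))); last first.
  by move=> g /andP [_ /negbTE ->].
rewrite big_split /=.
rewrite (eq_bigl (fun g => g \in [set g in A | step_ok L V k g])); last first.
  by move=> g; rewrite inE.
rewrite [X in _ + X](eq_bigl (fun g => g \in [set g in A | ~~ step_ok L V k g])); last first.
  by move=> g; rewrite inE.
have S1 : \sum_(i in A | step_ok L V k i) loop_incr delta L V i s = 0.
  rewrite (eq_bigl (fun g => g \in [set g in A | step_ok L V k g])).
    exact: (IH us _ cl').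
  by move=> g; rewrite inE.
rewrite S1 addr0 !sumr_const.
set a := #|[set g in A | step_ok L V k g]|.
set b := #|[set g in A | ~~ step_ok L V k g]|.
have Hab : (a + b)%N = #|A|.
  rewrite -(cardID (step_ok L V k) A); congr (_ + _)%N; apply: eq_card => g; rewrite !inE // andbC; congr (_ && _); rewrite unfold_in.
have Hb : b%:R = (2%:R ^+ o - 1) * (a%:R : R).
  have := congr1 (fun n : nat => (n%:R : R)) Hab.
  rewrite (row_count Linj V clk) -/a natrD natrM natrX => E.
  by rewrite mulrBl mul1r -E addrC addKr.
rewrite -[delta *+ a]mulr_natr -[_ *+ b]mulr_natr Hb.
have h2 := pow2_neq1 R o_gt0.
by rewrite mulNr mulrA divfK // subrr.
Qed.

Lemma loop_cat (R : realFieldType) h o l (delta : R) (L : 'M['I_l]_(h,o))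
  (V : 'M[bool]_(h,o)) g (s1 s2 : seq 'I_h) :
  (forall k, k \in s1 -> step_ok L V k g) ->
  loop_incr delta L V g (s1 ++ s2) = delta *+ size s1 + loop_incr delta L V g s2.
Proof.
elim: s1 => [|k s1 IH] H /=; first by rewrite add0r.
rewrite H ?mem_head // IH; last by move=> k' ks; apply: H; rewrite in_cons ks orbT.
by rewrite mulrS addrA.
Qed.

Lemma schema_mem l (D : {set 'I_l}) g c :
  (g \in schema D c) = (schema D g == schema D c).
Proof.
apply/idP/eqP => [H | <-]; last by rewrite inE; apply/forall_inP.
apply/setP => x; rewrite !inE.
move: H; rewrite inE => /forall_inP H.
apply/forall_inP/forall_inP => H2 j jD.
  by rewrite (eqP (H2 j jD)) H.
by rewrite (eqP (H2 j jD)) eq_sym H.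
Qed.

Lemma schema_card l (D : {set 'I_l}) c c' : #|schema D c| = #|schema D c'|.
Proof.
suff H : forall c c', (#|schema D c| <= #|schema D c'|)%N.
  by apply/eqP; rewrite eqn_leq !H.
move=> {}c {}c'.
apply: (card_flip_le (m := [ffun p => (p \in D) && (c p != c' p)])) => g.
rewrite !inE => /forall_inP H; apply/forall_inP => j jD.
rewrite !ffunE jD /= (eqP (H j jD)); by case: (c j); case: (c' j).
Qed.

Lemma drop_ge h i (k : 'I_h) : k \in drop i (enum 'I_h) -> (i <= k)%N.
Proof.
move=> H; have : val k \in map val (drop i (enum 'I_h)) by apply: map_f.
by rewrite map_drop val_enum_ord drop_iota mem_iota add0n => /andP [].
Qed.

Lemma take_lt h i (k : 'I_h) : k \in take i (enum 'I_h) -> (k < i)%N.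
Proof.
move=> H; have : val k \in map val (take i (enum 'I_h)) by apply: map_f.
by rewrite map_take val_enum_ord take_iota mem_iota add0n leq_min => /andP [_ /andP []].
Qed.

Definition c0 h o l (L : 'M['I_l]_(h,o)) (V : 'M[bool]_(h,o)) (i : nat) : bstring l :=
  [ffun p => [exists k : 'I_h, exists j : 'I_o, [&& (k < i)%N, L k j == p & V k j]]].

Lemma c0E h o l (L : 'M['I_l]_(h,o))
  (Linj : injective (fun p : 'I_h * 'I_o => L p.1 p.2)) (V : 'M[bool]_(h,o)) i (k : 'I_h) (j : 'I_o) :
  (k < i)%N -> c0 L V i (L k j) = V k j.
Proof.
move=> ki; rewrite ffunE.
apply/existsP/idP => [[k' /existsP [j' /and3P [_ E Vk']]] | Vk].
  by move: E; rewrite (Linj2 Linj) => /andP [/eqP Ek /eqP Ej]; rewrite -Ek -Ej.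
by exists k; apply/existsP; exists j; rewrite ki eqxx Vk.
Qed.

Lemma stage_schema h o l (L : 'M['I_l]_(h,o))
  (Linj : injective (fun p : 'I_h * 'I_o => L p.1 p.2)) V i :
  stage L V i = schema (rows_positions L i) (c0 L V i).
Proof.
apply/setP => g; rewrite !inE.
apply/forallP/forall_inP => [H p /imsetP [[k j] ki ->] | H k].
  rewrite inE /= in ki.
  have := H k; rewrite ki /= => /forallP/(_ j)/eqP ->.
  by rewrite (c0E Linj).
apply/implyP => ki; apply/forallP => j.
have := H (L k j); rewrite (c0E Linj) //; apply.
by apply/imsetP; exists (k, j); rewrite ?inE.
Qed.

Theorem mainTheorem4 (R : realFieldType) (h o l : nat) (delta : R)
  (L : 'M['I_l]_(h, o)) (V : 'M[bool]_(h, o)) (i : nat) :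
  descriptor_ok delta L ->
  (1 <= i <= h)%N ->
  \sum_(xi in schema_partition (rows_positions L i) | xi != stage L V i)
      fitness_signal delta L V xi
  = - (i%:R * delta).
Proof.
move=> [_ [o0 [_ [_ [_ Linj]]]]] /andP [_ ih].
set D := rows_positions L i.
set F := staircase_mean delta L V.
have H0 : \sum_(g in [set: bstring l]) F g = 0.
  rewrite (eq_bigr (fun g => loop_incr delta L V g (enum 'I_h))); last first.
    by move=> g _; rewrite /F /staircase_mean add0r.
  by apply: (T0 delta Linj V o0 (enum_uniq _)) => m _ g _; rewrite inE.
have clS : closed_under L (stage L V i) (drop i (enum 'I_h)).
  move=> m Hm g; rewrite !inE => /forallP H; apply/forallP => k; apply/implyP => ki.
  have /forallP ok := implyP (H k) ki; apply/forallP => j; rewrite ffunE.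
  have -> : m (L k j) = false.
    apply/negbTE/negP => /Hm; rewrite inE => /existsP [k' /existsP [j' /andP [ks' E]]].
    move: E; rewrite (Linj2 Linj) => /andP [/eqP Ek _].
    by have := drop_ge ks'; rewrite Ek leqNgt ki.
  by rewrite addbF; apply: ok.
set N := #|stage L V i|.
have HS : \sum_(g in stage L V i) F g = (delta *+ i) *+ N.
  rewrite (eq_bigr (fun g => delta *+ i + loop_incr delta L V g (drop i (enum 'I_h)))).
    rewrite big_split /= (T0 delta Linj V o0 (drop_uniq _ (enum_uniq _)) clS) addr0.
    by rewrite sumr_const.
  move=> g gS; rewrite /F /staircase_mean add0r -{1}(cat_take_drop i (enum 'I_h)).
  rewrite loop_cat ?size_takel ?size_enum_ord //.
  move=> k /take_lt ki; rewrite inE in gS.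
  exact: (implyP (forallP gS k) ki).
have Np : (0 < N)%N.
  rewrite /N (stage_schema Linj) card_gt0; apply/set0Pn; exists (c0 L V i).
  by rewrite inE; apply/forall_inP.
have cardxi : forall xi, xi \in schema_partition D -> #|xi| = N.
  move=> xi /imsetP [c _ ->]; rewrite /N (stage_schema Linj); exact: schema_card.
have meanT : schema_mean delta L V [set: bstring l] = 0.
  by rewrite /schema_mean H0 mul0r.
have Hall : \sum_(xi in schema_partition D) schema_mean delta L V xi = 0.
  transitivity (\sum_(xi in schema_partition D) (\sum_(g in xi) F g) / N%:R).
    by apply: eq_bigr => xi xP; rewrite /schema_mean cardxi.
  rewrite -mulr_suml.
  suff -> : \sum_(xi in schema_partition D) \sum_(g in xi) F g = 0 by rewrite mul0r.
  transitivity (\sum_(g in [set: bstring l]) F g); last exact: H0.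
  symmetry; rewrite (partition_big (fun g => schema D g) (fun xi => xi \in schema_partition D)).
    apply: eq_bigr => xi /imsetP [c _ ->]; apply: eq_bigl => g.
    by rewrite in_setT /= schema_mem.
  by move=> g _; apply/imsetP; exists g.
rewrite (eq_bigr (fun xi => schema_mean delta L V xi)); last first.
  by move=> xi _; rewrite /fitness_signal meanT subr0.
move: Hall; rewrite (bigD1 (stage L V i)) /=; last first.
  by rewrite (stage_schema Linj); apply/imsetP; exists (c0 L V i).
move/eqP; rewrite addrC addr_eq0 => /eqP ->.
rewrite /schema_mean HS -/N -[_ *+ N]mulr_natr mulfK ?mulr_natl //.
by rewrite pnatr_eq0 -lt0n.
Qed.
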